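(* There exists a continuous function $f:\mathbb{R}\to\mathbb{R}$ such that for every $x\in\mathbb{R}$ there is $\xi_x\in\mathbb{R}$ with $$\liminf_{y\to x}\frac{f(y)-f(x)-\xi_x(y-x)}{|y-x|^2}>-\infty,$$ and yet there is a set $S\subset\mathbb{R}$ of positive Lebesgue measure such that for every $x\in S$ and every $\xi\in\mathbb{R}$, $$\limsup_{y\to x}\frac{f(y)-f(x)-\xi(y-x)}{|y-x|^2}=+\infty.$$ *)

(* Defs.v *)
From Stdlib Require Import Reals Lra.
Open Scope R_scope.

(* Lebesgue outer measure of S is <= c:
   for every eps > 0 there is a countable cover of S by open intervals
   (a n, b n) with total length <= c + eps. *)
Definition outer_le (S : R -> Prop) (c : R) : Prop :=
  forall eps : R, 0 < eps ->
    exists a b : nat -> R,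
      (forall n, a n <= b n) /\
      (forall x, S x -> exists n, a n < x < b n) /\
      (forall N, sum_f_R0 (fun n => b n - a n) N <= c + eps).

(* Carathéodory measurability: for every A,
   outer(A /\ S) + outer(A \ S) <= outer(A)  (the reverse inequality is
   automatic). Since {c | outer_le S c} = [outer S, +oo), this reads: *)
Definition lebesgue_measurable (S : R -> Prop) : Prop :=
  forall (A : R -> Prop) (c : R), outer_le A c ->
    exists c1 c2 : R,
      outer_le (fun x => A x /\ S x) c1 /\
      outer_le (fun x => A x /\ ~ S x) c2 /\
      c1 + c2 <= c.

Definition positive_measure (S : R -> Prop) : Prop :=
  lebesgue_measurable S /\ ~ outer_le S 0.

Definition liminf_gt_neg_infty (g : R -> R) (x : R) : Prop :=
  exists M delta : R, 0 < delta /\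
    forall y, 0 < Rabs (y - x) < delta -> M <= g y.

Definition limsup_eq_pos_infty (g : R -> R) (x : R) : Prop :=
  forall M delta : R, 0 < delta ->
    exists y, 0 < Rabs (y - x) < delta /\ M < g y.

Definition quot2 (f : R -> R) (x xi : R) : R -> R :=
  fun y => (f y - f x - xi * (y - x)) / (Rabs (y - x)) ^ 2.

(* Main.v *)
Require Import Defs.
From Stdlib Require Import Reals Lra Lia Psatz ClassicalEpsilon Classical.
Open Scope R_scope.

Lemma le_eps a b : (forall eps, 0 < eps -> a <= b + eps) -> a <= b.
Proof. intros H. destruct (Rle_lt_dec a b); auto. specialize (H ((a-b)/2)). lra. Qed.

Lemma sum_nonneg (u : nat -> R) N : (forall n, 0 <= u n) -> 0 <= sum_f_R0 u N.
Proof. intros H; induction N; simpl; [apply H| specialize (H (S N)); lra]. Qed.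

Lemma sum_mono_N (u : nat -> R) N K : (forall n, 0 <= u n) -> (N <= K)%nat ->
  sum_f_R0 u N <= sum_f_R0 u K.
Proof. intros H HK. induction HK; [lra|]. simpl. specialize (H (S m)). lra. Qed.

Lemma sum_le (u v : nat -> R) N : (forall n, u n <= v n) -> sum_f_R0 u N <= sum_f_R0 v N.
Proof. intros H; induction N; simpl; [apply H| specialize (H (S N)); lra]. Qed.

Lemma sum_plus (u v : nat -> R) N : sum_f_R0 (fun n => u n + v n) N = sum_f_R0 u N + sum_f_R0 v N.
Proof. induction N; simpl; lra. Qed.

Lemma sum_scal (u : nat -> R) q N : sum_f_R0 (fun n => q * u n) N = q * sum_f_R0 u N.
Proof. induction N; simpl; lra. Qed.

Lemma sum_geom N : sum_f_R0 (fun n => (/2)^n) N = 2 - (/2)^N.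
Proof. induction N; simpl; [lra|]. rewrite IHN. lra. Qed.

Lemma sum_geom_le q N : 0 <= q -> sum_f_R0 (fun n => q * (/2)^n) N <= 2 * q.
Proof. intros. rewrite sum_scal, sum_geom. assert (0 < (/2)^N) by (apply pow_lt; lra). nra. Qed.

Definition il (u v : nat -> R) (n : nat) : R :=
  if Nat.even n then u (Nat.div2 n) else v (Nat.div2 n).

Lemma il_even u v k : il u v (2*k) = u k.
Proof. unfold il. rewrite Nat.even_even, Nat.div2_double. auto. Qed.
Lemma il_odd u v k : il u v (S (2*k)) = v k.
Proof. unfold il. replace (S (2*k)) with (2*k+1)%nat by lia. rewrite Nat.even_odd.
  replace (2*k+1)%nat with (S (2*k)) by lia. rewrite Nat.div2_succ_double. auto. Qed.

Lemma il_sum_odd u v K : sum_f_R0 (il u v) (S (2*K)) = sum_f_R0 u K + sum_f_R0 v K.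
Proof.
  induction K.
  - simpl. unfold il. simpl. lra.
  - replace (S (2 * S K)) with (S (S (S (2*K)))) by lia.
    rewrite tech5, tech5, IHK. replace (S (S (2*K))) with (2 * S K)%nat by lia.
    rewrite il_even. replace (S (2 * S K)) with (S (S (S (2*K)))) by lia.
    replace (S (S (S (2*K)))) with (S (2 * S K)) by lia. rewrite il_odd.
    simpl. lra.
Qed.

Lemma il_sum u v N : (forall n, 0 <= u n) -> (forall n, 0 <= v n) ->
  sum_f_R0 (il u v) N <= sum_f_R0 u N + sum_f_R0 v N.
Proof.
  intros Hu Hv. rewrite <- il_sum_odd. apply sum_mono_N; [|lia].
  intros n. unfold il. destruct (Nat.even n); auto.
Qed.

Lemma outer_mono (X Y : R -> Prop) c : (forall x, X x -> Y x) -> outer_le Y c -> outer_le X c.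
Proof.
  intros HXY H eps He. destruct (H eps He) as (a & b & H1 & H2 & H3).
  exists a, b. repeat split; auto.
Qed.

Lemma outer_mono_c X c c' : c <= c' -> outer_le X c -> outer_le X c'.
Proof.
  intros Hc H eps He. destruct (H eps He) as (a & b & H1 & H2 & H3).
  exists a, b. repeat split; auto. intros N; specialize (H3 N); lra.
Qed.

Lemma outer_nonneg X c : outer_le X c -> 0 <= c.
Proof.
  intros H. apply le_eps. intros eps He. destruct (H eps He) as (a & b & H1 & H2 & H3).
  specialize (H3 O). simpl in H3. specialize (H1 O). lra.
Qed.

Lemma outer_union (X Y : R -> Prop) c1 c2 : outer_le X c1 -> outer_le Y c2 ->
  outer_le (fun x => X x \/ Y x) (c1 + c2).
Proof.
  intros H1 H2 eps He.
  destruct (H1 (eps/2) ltac:(lra)) as (a & b & A1 & A2 & A3).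
  destruct (H2 (eps/2) ltac:(lra)) as (a' & b' & B1 & B2 & B3).
  exists (il a a'), (il b b'). repeat split.
  - intros n; unfold il; destruct (Nat.even n); auto.
  - intros x [Hx|Hx].
    + destruct (A2 x Hx) as [n Hn]. exists (2*n)%nat. rewrite !il_even. auto.
    + destruct (B2 x Hx) as [n Hn]. exists (S (2*n)). rewrite !il_odd. auto.
  - intros N.
    assert (E : sum_f_R0 (fun n => il b b' n - il a a' n) N
                = sum_f_R0 (il (fun n => b n - a n) (fun n => b' n - a' n)) N).
    { apply sum_eq. intros i _. unfold il. destruct (Nat.even i); auto. }
    rewrite E. eapply Rle_trans; [apply il_sum|].
    + intros n; specialize (A1 n); lra.
    + intros n; specialize (B1 n); lra.
    + specialize (A3 N); specialize (B3 N); lra.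
Qed.

Lemma outer_inf X c0 : outer_le X c0 ->
  exists d, outer_le X d /\ forall c, outer_le X c -> d <= c.
Proof.
  intros H0.
  set (E := fun v => outer_le X (- v)).
  assert (Hb : bound E). { exists 0. intros v Hv. apply outer_nonneg in Hv. lra. }
  assert (Hne : exists v, E v). { exists (- c0). unfold E. rewrite Ropp_involutive. auto. }
  destruct (completeness E Hb Hne) as [m [Hm1 Hm2]].
  exists (- m). split.
  - intros eps He.
    assert (exists v, E v /\ m - eps/2 < v) as [v [Hv Hv2]].
    { apply NNPP. intros Hn. assert (m <= m - eps/2); [|lra].
      apply Hm2. intros v Hv. apply Rnot_lt_le. intros Hlt. apply Hn. eauto. }
    destruct (Hv (eps/2) ltac:(lra)) as (a & b & A1 & A2 & A3).
    exists a, b. repeat split; auto. intros N; specialize (A3 N); lra.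
  - intros c Hc. assert (E (- c)). { unfold E. rewrite Ropp_involutive; auto. }
    specialize (Hm1 _ H). lra.
Qed.

Definition ov (a b t : R) := Rmax 0 (Rmin b t - Rmax a 0).

Ltac rmm := unfold Rmax, Rmin in *; repeat destruct Rle_dec; lra.

Lemma ov_nonneg a b t : 0 <= ov a b t.
Proof. unfold ov; rmm. Qed.
Lemma ov_mono a b t t' : t <= t' -> ov a b t <= ov a b t'.
Proof. intros; unfold ov; rmm. Qed.
Lemma ov_incr a b t t' : Rmax a 0 <= t -> t <= t' -> t' <= b -> ov a b t + (t' - t) <= ov a b t'.
Proof. intros; unfold ov in *; rmm. Qed.
Lemma ov_le a b t : a <= b -> ov a b t <= b - a.
Proof. intros; unfold ov; rmm. Qed.

Lemma sum_bump (u v : nat -> R) k K d : (forall n, u n <= v n) -> (k <= K)%nat ->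
  u k + d <= v k -> sum_f_R0 u K + d <= sum_f_R0 v K.
Proof.
  intros H HK Hk. induction K.
  - assert (k = O) by lia. subst. simpl. auto.
  - simpl. destruct (Nat.eq_dec k (S K)).
    + subst. pose proof (sum_le u v K H). lra.
    + assert (k <= K)%nat by lia. specialize (IHK H0). specialize (H (S K)). lra.
Qed.

Lemma heine_borel (al be : nat -> R) : (forall n, al n <= be n) ->
  (forall x, 0 <= x <= 1 -> exists n, al n < x < be n) ->
  exists N, 1 <= sum_f_R0 (fun n => be n - al n) N.
Proof.
  intros Hab Hcov.
  set (G := fun t => 0 <= t <= 1 /\ exists N, t <= sum_f_R0 (fun n => ov (al n) (be n) t) N).
  assert (HG0 : G 0). { split; [lra|]. exists O. simpl. apply ov_nonneg. }
  assert (Hb : bound G). { exists 1. intros t [Ht _]. lra. }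
  destruct (completeness G Hb (ex_intro _ 0 HG0)) as [s [Hs1 Hs2]].
  assert (Hs0 : 0 <= s) by (apply Hs1; auto).
  assert (Hs1' : s <= 1). { apply Hs2. intros t [Ht _]. lra. }
  destruct (Hcov s (conj Hs0 Hs1')) as [k Hk].
  assert (Ht : exists t, G t /\ Rmax (al k) 0 <= t /\ t <= s).
  { destruct (Rlt_or_le (al k) 0).
    - exists 0. split; auto. split; [rmm|lra].
    - apply NNPP. intros Hn.
      assert (s <= al k); [|lra].
      apply Hs2. intros t Gt. apply Rnot_lt_le. intros Hlt. apply Hn.
      exists t. split; auto. split; [rmm|]. apply Hs1; auto. }
  destruct Ht as (t & [Gt0 [N HN]] & Ht1 & Ht2).
  set (t'' := Rmin 1 ((s + be k)/2)).
  assert (HG'' : G t'').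
  { split; [unfold t''; rmm|].
    exists (Nat.max N k).
    assert (t <= sum_f_R0 (fun n => ov (al n) (be n) t) (Nat.max N k)).
    { eapply Rle_trans; [apply HN|]. apply sum_mono_N; [intros; apply ov_nonneg| lia]. }
    assert (sum_f_R0 (fun n => ov (al n) (be n) t) (Nat.max N k) + (t'' - t) <=
            sum_f_R0 (fun n => ov (al n) (be n) t'') (Nat.max N k)).
    { apply sum_bump with k.
      - intros n. apply ov_mono. unfold t''; rmm.
      - lia.
      - apply ov_incr; auto; unfold t''; rmm. }
    lra. }
  assert (t'' <= s) by (apply Hs1; auto).
  assert (t'' = 1) by (unfold t'' in *; rmm).
  rewrite H0 in HG''. destruct HG'' as [_ [N' HN']].
  exists N'. eapply Rle_trans; [apply HN'|]. apply sum_le. intros n. apply ov_le; auto.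
Qed.

Lemma meas_ext (E F : R -> Prop) : (forall x, E x <-> F x) -> lebesgue_measurable E -> lebesgue_measurable F.
Proof.
  intros HEF HE A c HA. destruct (HE A c HA) as (c1 & c2 & H1 & H2 & H3).
  exists c1, c2. split; [|split]; auto.
  - eapply outer_mono; [|apply H1]. intros x [Hx Hy]. split; auto. apply HEF; auto.
  - eapply outer_mono; [|apply H2]. intros x [Hx Hy]. split; auto. intros He; apply Hy, HEF; auto.
Qed.

Lemma meas_compl E : lebesgue_measurable E -> lebesgue_measurable (fun x => ~ E x).
Proof.
  intros HE A c HA. destruct (HE A c HA) as (c1 & c2 & H1 & H2 & H3).
  exists c2, c1. split; [|split]; auto; [|lra].
  eapply outer_mono; [|apply H1]. intros x [Hx Hy]. split; auto. apply NNPP; auto.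
Qed.

Lemma meas_inter E F : lebesgue_measurable E -> lebesgue_measurable F ->
  lebesgue_measurable (fun x => E x /\ F x).
Proof.
  intros HE HF A c HA. destruct (HE A c HA) as (c1 & c2 & H1 & H2 & H3).
  destruct (HF _ _ H1) as (d1 & d2 & K1 & K2 & K3).
  exists d1, (d2 + c2). split; [|split]; [| |lra].
  - eapply outer_mono; [|apply K1]. intros x [Hx [He Hf]]. auto.
  - eapply outer_mono; [|apply outer_union; [apply K2|apply H2]].
    intros x [Hx Hn]. destruct (classic (E x)); [left|right]; auto.
Qed.

Lemma meas_union E F : lebesgue_measurable E -> lebesgue_measurable F ->
  lebesgue_measurable (fun x => E x \/ F x).
Proof.
  intros HE HF. eapply meas_ext; [|apply (meas_compl _ (meas_inter _ _ (meas_compl _ HE) (meas_compl _ HF)))].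
  intros x; simpl. split.
  - intros H. apply NNPP. intros Hn. apply H. split; intros Hx; apply Hn; auto.
  - intros H [H1 H2]; destruct H; auto.
Qed.

Definition piece (E : R -> Prop) a b d a1 b1 a2 b2 : Prop :=
  a1 <= b1 /\ a2 <= b2 /\ (forall x, a < x < b -> E x -> a1 < x < b1) /\
  (forall x, a < x < b -> ~ E x -> a2 < x < b2) /\ (b1 - a1) + (b2 - a2) <= b - a + d.

Lemma meas_split E : (forall a b d, a <= b -> 0 < d -> exists p : (R*R)*(R*R),
     piece E a b d (fst (fst p)) (snd (fst p)) (fst (snd p)) (snd (snd p))) ->
  lebesgue_measurable E.
Proof.
  intros HP A c HA.
  destruct (outer_inf (fun x => A x /\ E x) c) as [d1 [Hd1 Hd1m]].
  { eapply outer_mono; [|apply HA]. intros x []; auto. }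
  destruct (outer_inf (fun x => A x /\ ~ E x) c) as [d2 [Hd2 Hd2m]].
  { eapply outer_mono; [|apply HA]. intros x []; auto. }
  exists d1, d2. split; [|split]; auto.
  apply le_eps. intros eps0 He0. set (eps := eps0 / 2).
  destruct (HA eps ltac:(unfold eps; lra)) as (a & b & A1 & A2 & A3).
  assert (Hp : forall n, exists p : (R*R)*(R*R),
     piece E (a n) (b n) ((eps/2) * (/2)^n) (fst (fst p)) (snd (fst p)) (fst (snd p)) (snd (snd p))).
  { intros n. apply HP; auto. assert (0 < (/2)^n) by (apply pow_lt; lra). unfold eps. nra. }
  set (p := fun n => proj1_sig (constructive_indefinite_description _ (Hp n))).
  assert (Hpp : forall n, piece E (a n) (b n) ((eps/2) * (/2)^n) (fst (fst (p n))) (snd (fst (p n))) (fst (snd (p n))) (snd (snd (p n)))).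
  { intros n. unfold p. destruct (constructive_indefinite_description _ (Hp n)); auto. }
  set (a1 := fun n => fst (fst (p n))). set (b1 := fun n => snd (fst (p n))).
  set (a2 := fun n => fst (snd (p n))). set (b2 := fun n => snd (snd (p n))).
  assert (Hu : forall n, 0 <= b1 n - a1 n). { intros n; destruct (Hpp n) as [? _]. unfold a1, b1; lra. }
  assert (Hv : forall n, 0 <= b2 n - a2 n). { intros n; destruct (Hpp n) as [_ [? _]]. unfold a2, b2; lra. }
  assert (HUV : forall N N', sum_f_R0 (fun n => b1 n - a1 n) N + sum_f_R0 (fun n => b2 n - a2 n) N' <= c + 2 * eps).
  { intros N N'. set (K := Nat.max N N').
    pose proof (sum_mono_N _ N K Hu ltac:(lia)). pose proof (sum_mono_N _ N' K Hv ltac:(lia)).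
    assert (sum_f_R0 (fun n => (b1 n - a1 n) + (b2 n - a2 n)) K <=
            sum_f_R0 (fun n => (b n - a n) + (eps/2) * (/2)^n) K).
    { apply sum_le. intros n. destruct (Hpp n) as [_ [_ [_ [_ ?]]]]. unfold a1, b1, a2, b2. lra. }
    rewrite !sum_plus in H1. pose proof (sum_geom_le (eps/2) K ltac:(unfold eps; lra)).
    specialize (A3 K). lra. }
  assert (HV : forall N', sum_f_R0 (fun n => b2 n - a2 n) N' <= c + 2 * eps - d1).
  { intros N'. assert (d1 <= c + 2 * eps - sum_f_R0 (fun n => b2 n - a2 n) N'); [|lra].
    apply Hd1m. intros e He. exists a1, b1. split; [|split].
    - intros n; specialize (Hu n); lra.
    - intros x [Hx HE]. destruct (A2 x Hx) as [n Hn]. exists n.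
      destruct (Hpp n) as [_ [_ [? _]]]. apply H; auto.
    - intros N. specialize (HUV N N'). lra. }
  assert (d2 <= c + 2 * eps - d1); [|unfold eps in *; lra].
  apply Hd2m. intros e He. exists a2, b2. split; [|split].
  - intros n; specialize (Hv n); lra.
  - intros x [Hx HE]. destruct (A2 x Hx) as [n Hn]. exists n.
    destruct (Hpp n) as [_ [_ [_ [? _]]]]. apply H; auto.
  - intros N. specialize (HV N). lra.
Qed.

Lemma meas_le t : lebesgue_measurable (fun x => x <= t).
Proof.
  apply meas_split. intros a b d Hab Hd.
  exists ((a, Rmax a (Rmin b (t + d/2))), (Rmin b (Rmax a t), b)). simpl.
  unfold piece. split; [|split; [|split; [|split]]].
  - rmm.
  - rmm.
  - intros x Hx Ht. rmm.
  - intros x Hx Ht. apply Rnot_le_lt in Ht. rmm.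
  - rmm.
Qed.

Lemma meas_lt t : lebesgue_measurable (fun x => x < t).
Proof.
  apply meas_split. intros a b d Hab Hd.
  exists ((a, Rmax a (Rmin b t)), (Rmin b (Rmax a (t - d/2)), b)). simpl.
  unfold piece. split; [|split; [|split; [|split]]].
  - rmm.
  - rmm.
  - intros x Hx Ht. rmm.
  - intros x Hx Ht. apply Rnot_lt_le in Ht. rmm.
  - rmm.
Qed.

Lemma meas_ge t : lebesgue_measurable (fun x => t <= x).
Proof.
  eapply meas_ext; [|apply meas_compl, (meas_lt t)]. intros x; simpl. split.
  - intros H; apply Rnot_lt_le; auto.
  - intros H1 H2; lra.
Qed.

Lemma meas_limit (S : R -> Prop) (SM : nat -> R -> Prop) (dl : nat -> R) :
  (forall M, lebesgue_measurable (SM M)) ->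
  (forall M x, S x -> SM M x) ->
  (forall M, outer_le (fun x => SM M x /\ ~ S x) (dl M)) ->
  (forall eps, 0 < eps -> exists M, dl M <= eps) ->
  lebesgue_measurable S.
Proof.
  intros Hm Hsub Hdl Hlim A c HA.
  destruct (outer_inf (fun x => A x /\ S x) c) as [d1 [Hd1 Hd1m]].
  { eapply outer_mono; [|apply HA]. intros x []; auto. }
  destruct (outer_inf (fun x => A x /\ ~ S x) c) as [d2 [Hd2 Hd2m]].
  { eapply outer_mono; [|apply HA]. intros x []; auto. }
  exists d1, d2. split; [|split]; auto.
  apply le_eps. intros eps He. destruct (Hlim eps He) as [M HM].
  destruct (Hm M A c HA) as (c1 & c2 & H1 & H2 & H3).
  assert (d1 <= c1). { apply Hd1m. eapply outer_mono; [|apply H1]. intros x [? ?]; split; auto. }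
  assert (d2 <= c2 + dl M).
  { apply Hd2m. eapply outer_mono; [|apply outer_union; [apply H2|apply (Hdl M)]].
    intros x [Hx Hn]. destruct (classic (SM M x)); [right|left]; auto. }
  lra.
Qed.

Lemma sq_le1 u : u^2 <= 1 -> -1 <= u <= 1.
Proof. intros. split; nra. Qed.
Lemma sq_gt1 u : 1 < u^2 -> u < -1 \/ 1 < u.
Proof. intros. destruct (Rlt_or_le u (-1)); [left; auto| right; nra]. Qed.
Lemma phi_lip u v : Rabs (Rmax 0 (1 - u^2) - Rmax 0 (1 - v^2)) <= 2 * Rabs (u - v).
Proof. unfold Rmax, Rabs; repeat destruct Rle_dec; repeat destruct Rcase_abs;
  repeat match goal with
  | H : 0 <= 1 - ?w ^ 2 |- _ => assert (w^2 <= 1) by lra; clear H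
  | H : ~ (0 <= 1 - ?w ^ 2) |- _ => assert (1 < w^2) by lra; clear H
  end;
  repeat match goal with
  | H : ?w ^ 2 <= 1 |- _ => apply sq_le1 in H
  | H : 1 < ?w ^ 2 |- _ => apply sq_gt1 in H
  end; try nra; intuition nra. Qed.

Definition lv (m : nat) : nat := Nat.log2 m.
Definition cc (m : nat) : R := (INR (m - 2 ^ lv m)%nat + /2) * (/2) ^ (lv m).
Definition rr (m : nat) : R := (/2) ^ (m + 3).
Definition HH (m : nat) : R := (3/4) ^ (lv m).
Definition g (m : nat) (y : R) : R := HH m * Rmax 0 (1 - ((y - cc m) / rr m) ^ 2).

Lemma rr_pos m : 0 < rr m. Proof. unfold rr; apply pow_lt; lra. Qed.
Lemma HH_pos m : 0 < HH m. Proof. unfold HH; apply pow_lt; lra. Qed.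

Lemma pow_decr x m n : 0 <= x <= 1 -> (m <= n)%nat -> x ^ n <= x ^ m.
Proof.
  intros Hx Hmn. induction Hmn; [lra|]. simpl.
  assert (0 <= x ^ m0) by (apply pow_le; lra). nra.
Qed.

Lemma HH_le1 m : HH m <= 1.
Proof. unfold HH. pose proof (pow_decr (3/4) 0 (lv m) ltac:(lra) ltac:(lia)). simpl in H. lra. Qed.

Lemma g_nonneg m y : 0 <= g m y.
Proof. unfold g. pose proof (HH_pos m). apply Rmult_le_pos; [lra| apply Rmax_l]. Qed.

Lemma g_le_HH m y : g m y <= HH m.
Proof.
  unfold g. pose proof (HH_pos m). assert (Rmax 0 (1 - ((y - cc m) / rr m) ^ 2) <= 1).
  { apply Rmax_lub; [lra|]. assert (0 <= ((y - cc m) / rr m) ^ 2) by (apply pow2_ge_0). lra. }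
  assert (0 <= Rmax 0 (1 - ((y - cc m) / rr m) ^ 2)) by apply Rmax_l. nra.
Qed.

Lemma g_lip m y z : Rabs (g m y - g m z) <= (2 * HH m / rr m) * Rabs (y - z).
Proof.
  unfold g. pose proof (HH_pos m). pose proof (rr_pos m).
  rewrite <- Rmult_minus_distr_l, Rabs_mult, (Rabs_right (HH m)) by lra.
  pose proof (phi_lip ((y - cc m) / rr m) ((z - cc m) / rr m)).
  replace ((y - cc m) / rr m - (z - cc m) / rr m) with ((y - z) * / rr m) in H1 by (field; lra).
  rewrite Rabs_mult, Rabs_inv in H1. rewrite (Rabs_right (rr m)) in H1 by lra.
  replace (2 * HH m / rr m * Rabs (y - z)) with (HH m * (2 * (Rabs (y - z) * / rr m))) by (field; lra).
  apply Rmult_le_compat_l; lra.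
Qed.

Lemma gbound y : bound (fun v => exists m, v = g m y).
Proof. exists 1. intros v [m ->]. pose proof (g_le_HH m y). pose proof (HH_le1 m). lra. Qed.

Definition ff (y : R) : R :=
  proj1_sig (completeness _ (gbound y) (ex_intro _ (g 0 y) (ex_intro _ 0%nat eq_refl))).

Lemma f_spec y : is_lub (fun v => exists m, v = g m y) (ff y).
Proof. unfold ff. destruct completeness; auto. Qed.

Lemma f_ge m y : g m y <= ff y.
Proof. destruct (f_spec y) as [H _]. apply H. eauto. Qed.

Lemma f_le y b : (forall m, g m y <= b) -> ff y <= b.
Proof. intros Hb. destruct (f_spec y) as [_ H]. apply H. intros v [m ->]. auto. Qed.

Lemma f_nonneg y : 0 <= ff y.
Proof. pose proof (f_ge 0 y). pose proof (g_nonneg 0 y). lra. Qed.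

Fixpoint FF (N : nat) (y : R) : R :=
  match N with O => 0 | S N' => Rmax (FF N' y) (g N' y) end.

Lemma FF_nonneg N y : 0 <= FF N y.
Proof. induction N; simpl; [lra|]. eapply Rle_trans; [apply IHN| apply Rmax_l]. Qed.

Lemma FF_ge N m y : (m < N)%nat -> g m y <= FF N y.
Proof.
  intros H. induction H; simpl; [apply Rmax_r|]. eapply Rle_trans; [apply IHle| apply Rmax_l].
Qed.

Lemma FF_le_f N y : FF N y <= ff y.
Proof. induction N; simpl; [apply f_nonneg|]. apply Rmax_lub; auto. apply f_ge. Qed.

Lemma FF_att N y : FF N y = 0 \/ exists m, (m < N)%nat /\ FF N y = g m y.
Proof.
  induction N; simpl; [auto|]. unfold Rmax. destruct Rle_dec.
  - right. exists N. split; auto.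
  - destruct IHN as [H|[m [Hm H]]]; [left; auto|right; exists m; split; [lia|auto]].
Qed.

Fixpoint Lam (N : nat) : R := match N with O => 0 | S N' => Lam N' + 2 * HH N' / rr N' end.

Lemma Lam_nonneg N : 0 <= Lam N.
Proof. induction N; simpl; [lra|]. pose proof (HH_pos N); pose proof (rr_pos N).
  assert (0 <= 2 * HH N / rr N) by (apply Rle_mult_inv_pos; lra). lra. Qed.

Lemma max_lip a b a' b' : Rabs (Rmax a b - Rmax a' b') <= Rabs (a - a') + Rabs (b - b').
Proof. unfold Rmax, Rabs; repeat destruct Rle_dec; repeat destruct Rcase_abs; lra. Qed.

Lemma FF_lip N y z : Rabs (FF N y - FF N z) <= Lam N * Rabs (y - z).
Proof.
  induction N; simpl.
  - rewrite Rminus_diag, Rabs_R0. lra.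
  - eapply Rle_trans; [apply max_lip|]. pose proof (g_lip N y z). lra.
Qed.

Lemma lv_pow n k : (k < 2 ^ n)%nat -> lv (2 ^ n + k) = n.
Proof. intros H. unfold lv. apply Nat.log2_unique; [lia|]. simpl. lia. Qed.

Lemma HH_tail T m : (2 ^ T <= m)%nat -> HH m <= (3/4) ^ T.
Proof.
  intros H. unfold HH. apply pow_decr; [lra|]. unfold lv.
  rewrite <- (Nat.log2_pow2 T) at 1 by lia. apply Nat.log2_le_mono; auto.
Qed.

Lemma f_approx T y : ff y <= Rmax (FF (2 ^ T) y) ((3/4) ^ T).
Proof.
  apply f_le. intros m. destruct (Nat.lt_ge_cases m (2 ^ T)).
  - eapply Rle_trans; [apply FF_ge; eauto| apply Rmax_l].
  - eapply Rle_trans; [apply g_le_HH|]. eapply Rle_trans; [apply HH_tail; eauto| apply Rmax_r].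
Qed.

Lemma tail_small eps : 0 < eps -> exists T, (3/4) ^ T < eps.
Proof.
  intros He. destruct (pow_lt_1_zero (3/4) ltac:(rewrite Rabs_right; lra) eps He) as [T HT].
  exists T. specialize (HT T (le_n T)). rewrite Rabs_right in HT; auto.
  apply Rle_ge, pow_le; lra.
Qed.

Lemma f_cont : continuity ff.
Proof.
  intros x. unfold continuity_pt, continue_in, limit1_in, limit_in. simpl. unfold R_dist.
  intros eps He. destruct (tail_small (eps/3) ltac:(lra)) as [T HT].
  set (N := (2 ^ T)%nat).
  pose proof (Lam_nonneg N).
  exists (eps / (3 * (Lam N + 1))). split.
  { apply Rlt_gt, Rdiv_lt_0_compat; lra. }
  intros y [_ Hy].
  assert (A : forall z, Rabs (ff z - FF N z) <= (3/4) ^ T).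
  { intros z. pose proof (FF_le_f N z). pose proof (f_approx T z). pose proof (FF_nonneg N z).
    assert (0 <= (3/4)^T) by (apply pow_le; lra).
    unfold N in *. rewrite Rabs_right by lra. unfold Rmax in *; destruct Rle_dec; lra. }
  pose proof (A y). pose proof (A x). pose proof (FF_lip N y x).
  assert (Lam N * Rabs (y - x) <= eps / 3).
  { assert (Lam N * Rabs (y - x) <= (Lam N + 1) * (eps / (3 * (Lam N + 1)))).
    { apply Rmult_le_compat; try lra. apply Rabs_pos. }
    replace ((Lam N + 1) * (eps / (3 * (Lam N + 1)))) with (eps/3) in H3 by (field; lra). lra. }
  replace (ff y - ff x) with ((ff y - FF N y) + (FF N y - FF N x) + (FF N x - ff x)) by ring.
  eapply Rle_lt_trans; [apply Rabs_triang|].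
  eapply Rle_lt_trans; [apply Rplus_le_compat_r, Rabs_triang|].
  rewrite Rabs_minus_sym in H1. lra.
Qed.

Lemma div_lower k a D : 0 < D -> k * D <= a -> k <= a / D.
Proof. intros HD H. replace k with ((k * D) / D) by (field; lra).
  unfold Rdiv. apply Rmult_le_compat_r; [left; apply Rinv_0_lt_compat; lra| lra]. Qed.

Lemma div_upper k a D : 0 < D -> k * D < a -> k < a / D.
Proof. intros HD H. replace k with ((k * D) / D) by (field; lra).
  unfold Rdiv. apply Rmult_lt_compat_r; [apply Rinv_0_lt_compat; lra| lra]. Qed.

Lemma f_liminf y : exists xi, liminf_gt_neg_infty (quot2 ff y xi) y.
Proof.
  pose proof (f_nonneg y). destruct (Req_dec (ff y) 0) as [H0|H0].
  - exists 0, 0, 1. split; [lra|]. intros z Hz. unfold quot2.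
    assert (0 < Rabs (z - y) ^ 2) by (apply pow_lt; lra).
    apply div_lower; auto. rewrite H0. pose proof (f_nonneg z). lra.
  - assert (Hp : 0 < ff y) by lra.
    destruct (tail_small (ff y) Hp) as [T HT].
    pose proof (f_approx T y). pose proof (FF_le_f (2^T) y).
    assert (E : FF (2^T) y = ff y) by (unfold Rmax in *; destruct Rle_dec; lra).
    destruct (FF_att (2^T) y) as [Hz|[m [Hm Hg]]]; [lra|].
    pose proof (HH_pos m) as HHp. pose proof (rr_pos m) as Hrp.
    assert (Hgy : g m y = ff y) by lra.
    assert (Hpos : 0 < 1 - ((y - cc m) / rr m) ^ 2).
    { unfold g in Hgy. unfold Rmax in Hgy. destruct Rle_dec; nra. }
    assert (Hfy : ff y = HH m * (1 - ((y - cc m) / rr m) ^ 2)).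
    { rewrite <- Hgy. unfold g. unfold Rmax. destruct Rle_dec; lra. }
    exists (- 2 * HH m * (y - cc m) / rr m ^ 2), (- HH m / rr m ^ 2), 1.
    split; [lra|]. intros z Hz. unfold quot2.
    assert (HD : 0 < Rabs (z - y) ^ 2) by (apply pow_lt; lra).
    apply div_lower; auto. rewrite pow2_abs.
    pose proof (f_ge m z).
    assert (HH m * (1 - ((z - cc m) / rr m) ^ 2) <= g m z).
    { unfold g. apply Rmult_le_compat_l; [lra|apply Rmax_r]. }
    assert (Id : HH m * (1 - ((z - cc m) / rr m) ^ 2) - HH m * (1 - ((y - cc m) / rr m) ^ 2)
        - (- 2 * HH m * (y - cc m) / rr m ^ 2) * (z - y) = - HH m / rr m ^ 2 * (z - y) ^ 2)
      by (field; lra).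
    rewrite Hfy. lra.
Qed.

Lemma cell x n : 0 <= x <= 1 -> exists k, (k < 2 ^ n)%nat /\ Rabs (x * 2 ^ n - (INR k + /2)) <= /2.
Proof.
  intros Hx. induction n.
  - exists O. split; [simpl; lia|]. simpl. unfold Rabs; destruct Rcase_abs; lra.
  - destruct IHn as [k [Hk Ha]].
    assert (Hb : - /2 <= x * 2 ^ n - (INR k + /2) <= /2) by (unfold Rabs in Ha; destruct Rcase_abs in Ha; lra).
    destruct (Rle_dec (x * 2 ^ n) (INR k + /2)).
    + exists (2 * k)%nat. split; [simpl; lia|]. rewrite mult_INR. simpl (INR 2).
      simpl pow. unfold Rabs; destruct Rcase_abs; lra.
    + exists (2 * k + 1)%nat. split; [simpl; lia|]. rewrite plus_INR, mult_INR. simpl (INR 2). simpl (INR 1).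
      simpl pow. unfold Rabs; destruct Rcase_abs; lra.
Qed.

Definition Sset (x : R) : Prop := 0 <= x <= 1 /\ forall m, x <= cc m - rr m \/ cc m + rr m <= x.

Lemma f_zero_S x : Sset x -> ff x = 0.
Proof.
  intros [Hx HS]. apply Rle_antisym; [|apply f_nonneg]. apply f_le. intros m.
  pose proof (rr_pos m). pose proof (HH_pos m).
  assert (1 <= ((x - cc m) / rr m) ^ 2).
  { replace (((x - cc m) / rr m) ^ 2) with ((x - cc m)^2 / (rr m)^2) by (field; lra).
    apply div_lower; [apply pow_lt; lra|]. destruct (HS m); nra. }
  unfold g, Rmax. destruct Rle_dec; [nra|lra].
Qed.

Lemma pow_half_two n : 2 ^ n * (/2) ^ n = 1.
Proof. rewrite <- Rpow_mult_distr. replace (2 * /2) with 1 by field. apply pow1. Qed.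

Lemma f_limsup x xi : Sset x -> limsup_eq_pos_infty (quot2 ff x xi) x.
Proof.
  intros HS M dl Hdl. pose proof (f_zero_S x HS) as Hf0. destruct HS as [Hx HSm].
  set (K := Rabs xi + Rabs M + 1).
  destruct (Pow_x_infinity (3/2) ltac:(rewrite Rabs_right; lra) K) as [N1 HN1].
  destruct (pow_lt_1_zero (/2) ltac:(rewrite Rabs_right; lra) dl Hdl) as [N2 HN2].
  set (n := Nat.max N1 N2).
  specialize (HN1 n ltac:(lia)). specialize (HN2 n ltac:(lia)).
  assert (P1 : 0 < (/2)^n) by (apply pow_lt; lra).
  assert (P2 : 0 < (3/2)^n) by (apply pow_lt; lra).
  rewrite Rabs_right in HN1 by lra. rewrite Rabs_right in HN2 by lra.
  destruct (cell x n Hx) as [k [Hk Ha]].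
  set (m := (2 ^ n + k)%nat).
  assert (Hlv : lv m = n) by (apply lv_pow; auto).
  assert (Hc : cc m = (INR k + /2) * (/2)^n).
  { unfold cc. rewrite Hlv. replace (m - 2 ^ n)%nat with k by (unfold m; lia). auto. }
  assert (HH1 : HH m = (3/2)^n * (/2)^n).
  { unfold HH. rewrite Hlv, <- Rpow_mult_distr. f_equal. field. }
  set (d := Rabs (cc m - x)).
  assert (Hd1 : d <= /2 * (/2)^n).
  { unfold d. replace (cc m - x) with (- ((x * 2 ^ n - (INR k + /2)) * (/2)^n)).
    2:{ rewrite Hc. rewrite Rmult_minus_distr_r, Rmult_assoc, pow_half_two. ring. }
    rewrite Rabs_Ropp, Rabs_mult, (Rabs_right ((/2)^n)) by lra.
    apply Rmult_le_compat_r; lra. }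
  assert (Hd0 : 0 < d).
  { unfold d. pose proof (rr_pos m). destruct (HSm m); unfold Rabs; destruct Rcase_abs; lra. }
  exists (cc m). split; [split; fold d; lra|].
  unfold quot2. fold d. rewrite Hf0.
  assert (Hfz : HH m <= ff (cc m)).
  { eapply Rle_trans; [|apply f_ge with (m := m)]. unfold g.
    replace ((cc m - cc m) / rr m) with 0 by (pose proof (rr_pos m); field; lra).
    unfold Rmax. destruct Rle_dec; lra. }
  assert (Hxi : xi * (cc m - x) <= Rabs xi * d).
  { unfold d. rewrite <- Rabs_mult. apply Rle_abs. }
  apply div_upper; [apply pow_lt; lra|].
  assert (HHK : 2 * K * d <= HH m).
  { rewrite HH1. assert (K * (/2)^n <= (3/2)^n * (/2)^n) by (apply Rmult_le_compat_r; lra).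
    nra. }
  assert (0 <= Rabs xi) by apply Rabs_pos. assert (0 <= Rabs M) by apply Rabs_pos.
  assert (M <= Rabs M) by apply Rle_abs.
  unfold K in HHK. simpl pow.
  assert ((/2)^n <= 1) by (pose proof (pow_decr (/2) 0 n ltac:(lra) ltac:(lia)); simpl in *; lra).
  assert (d <= 1) by lra.
  assert (Rabs M * (d * d) <= Rabs M * d) by (apply Rmult_le_compat_l; nra).
  assert (M * (d * d) <= Rabs M * (d * d)) by (apply Rmult_le_compat_r; nra).
  nra.
Qed.

Definition SM (M : nat) (x : R) : Prop :=
  0 <= x <= 1 /\ forall m, (m < M)%nat -> x <= cc m - rr m \/ cc m + rr m <= x.

Lemma SM_meas M : lebesgue_measurable (SM M).
Proof.
  induction M.
  - eapply meas_ext; [|apply (meas_inter _ _ (meas_ge 0) (meas_le 1))].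
    intros x. unfold SM. split.
    + intros [H1 H2]. split; [lra|]. intros m Hm; lia.
    + intros [H _]. lra.
  - eapply meas_ext; [|apply (meas_inter _ _ IHM (meas_union _ _ (meas_le (cc M - rr M)) (meas_ge (cc M + rr M))))].
    intros x. unfold SM. split.
    + intros [[H1 H2] H3]. split; auto. intros m Hm.
      destruct (Nat.eq_dec m M); [subst; auto| apply H2; lia].
    + intros [H1 H2]. split; [split; auto|]. apply H2; lia.
Qed.

Lemma rr_sum M N : sum_f_R0 (fun n => 2 * rr (n + M)) N <= (/2) ^ (M + 1).
Proof.
  assert (E : sum_f_R0 (fun n => 2 * rr (n + M)) N = sum_f_R0 (fun n => ((/2) ^ (M + 2)) * (/2) ^ n) N).
  { apply sum_eq. intros i _. unfold rr. rewrite !pow_add. simpl. field. }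
  rewrite E. eapply Rle_trans; [apply sum_geom_le; apply pow_le; lra|].
  rewrite !pow_add. simpl. assert (0 < (/2)^M) by (apply pow_lt; lra). lra.
Qed.

Lemma tail_outer M : outer_le (fun x => SM M x /\ ~ Sset x) ((/2) ^ M).
Proof.
  intros eps He.
  exists (fun n => cc (n + M) - rr (n + M)), (fun n => cc (n + M) + rr (n + M)).
  split; [|split].
  - intros n. pose proof (rr_pos (n + M)). lra.
  - intros x [[Hx HSM] HnS].
    assert (exists m, ~ (x <= cc m - rr m \/ cc m + rr m <= x)) as [m Hm].
    { apply not_all_ex_not. intros Hall. apply HnS. split; auto. }
    assert (M <= m)%nat.
    { destruct (Nat.lt_ge_cases m M); auto. exfalso. apply Hm, HSM; auto. }
    exists (m - M)%nat. replace (m - M + M)%nat with m by lia. lra.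
  - intros N. pose proof (rr_sum M N).
    assert (E : sum_f_R0 (fun n => cc (n + M) + rr (n + M) - (cc (n + M) - rr (n + M))) N
               = sum_f_R0 (fun n => 2 * rr (n + M)) N) by (apply sum_eq; intros; ring).
    rewrite E. rewrite pow_add in H. simpl in H. assert (0 < (/2)^M) by (apply pow_lt; lra). lra.
Qed.

Lemma S_meas : lebesgue_measurable Sset.
Proof.
  apply meas_limit with SM (fun M => (/2) ^ M).
  - apply SM_meas.
  - intros M x [Hx H]. split; auto.
  - apply tail_outer.
  - intros eps He. destruct (pow_lt_1_zero (/2) ltac:(rewrite Rabs_right; lra) eps He) as [N HN].
    exists N. specialize (HN N (le_n N)). rewrite Rabs_right in HN; [lra|].
    apply Rle_ge, pow_le; lra.
Qed.

Lemma S_pos : ~ outer_le Sset 0.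
Proof.
  intros H. destruct (H (/4) ltac:(lra)) as (a & b & A1 & A2 & A3).
  destruct (heine_borel (il a (fun m => cc m - rr m)) (il b (fun m => cc m + rr m))) as [N HN].
  - intros n. unfold il. destruct (Nat.even n); auto. pose proof (rr_pos (Nat.div2 n)). lra.
  - intros x Hx. destruct (classic (Sset x)) as [HS|HnS].
    + destruct (A2 x HS) as [n Hn]. exists (2 * n)%nat. rewrite !il_even. auto.
    + assert (exists m, ~ (x <= cc m - rr m \/ cc m + rr m <= x)) as [m Hm].
      { apply not_all_ex_not. intros Hall. apply HnS. split; auto. }
      exists (S (2 * m)). rewrite !il_odd. lra.
  - assert (E : sum_f_R0 (fun n => il b (fun m => cc m + rr m) n - il a (fun m => cc m - rr m) n) N
               = sum_f_R0 (il (fun n => b n - a n) (fun n => 2 * rr (n + 0))) N).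
    { apply sum_eq. intros i _. unfold il. destruct (Nat.even i); [auto|].
      rewrite Nat.add_0_r. ring. }
    rewrite E in HN.
    assert (sum_f_R0 (il (fun n => b n - a n) (fun n => 2 * rr (n + 0))) N <= /4 + /2).
    { eapply Rle_trans; [apply il_sum|].
      - intros n. specialize (A1 n). lra.
      - intros n. pose proof (rr_pos (n + 0)). lra.
      - pose proof (A3 N). pose proof (rr_sum 0 N). simpl pow in H1. lra. }
    lra.
Qed.

Theorem mainTheorem9 :
  exists f : R -> R,
    continuity f /\
    (forall x : R, exists xi : R, liminf_gt_neg_infty (quot2 f x xi) x) /\
    (exists S : R -> Prop,
        positive_measure S /\
        forall x : R, S x -> forall xi : R,
          limsup_eq_pos_infty (quot2 f x xi) x).
Proof.
  exists ff. split; [apply f_cont|]. split; [apply f_liminf|].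
  exists Sset. split.
  - split; [apply S_meas| apply S_pos].
  - intros x Hx xi. apply f_limsup; auto.
Qed.

Print Assumptions mainTheorem9.
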